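(* Let $k\ge2$, $d=k(k+1)/2$, and $r=r_k$. For $n\in\{0,\dots,d-1\}$ let $M_n=[\mu^n_{ji}]_{j,i=0}^2$ be the $3\times3$ matrix with entries $$\mu^n_{j0}=\tfrac1r\big((p^j_{n0})^2-p^j_{n0}p^j_{n1}-p^j_{n0}p^j_{n2}+p^j_{n1}p^j_{n2}\big),$$ $$\mu^n_{j1}=\tfrac1r\big((p^j_{n1})^2-p^j_{n0}p^j_{n1}+p^j_{n0}p^j_{n2}-p^j_{n1}p^j_{n2}\big),$$ $$\mu^n_{j2}=\tfrac1r\big((p^j_{n2})^2+p^j_{n0}p^j_{n1}-p^j_{n0}p^j_{n2}-p^j_{n1}p^j_{n2}\big).$$ Then for every $n$ and every cell $C=F_wK$ of $SG_k$, $$\begin{pmatrix}\nu_0(F_nC)\\\nu_1(F_nC)\\\nu_2(F_nC)\end{pmatrix}=M_n\begin{pmatrix}\nu_0(C)\\\nu_1(C)\\\nu_2(C)\end{pmatrix}.$$ Consequently, as vectors of measures, $$\begin{pmatrix}\nu_0\\\nu_1\\\nu_2\end{pmatrix}=\sum_{n=0}^{d-1}M_n\begin{pmatrix}\nu_0\circ F_n^{-1}\\\nu_1\circ F_n^{-1}\\\nu_2\circ F_n^{-1}\end{pmatrix},$$ where $(\nu_i\circ F_n^{-1})(A)=\nu_i(F_n^{-1}(A))$ for Borel $A\subseteq K$.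
   Context: Let $q_0,q_1,q_2$ be the vertices of a unit equilateral triangle $T\subset\mathbb R^2$. Fix $k\ge2$ and $d=k(k+1)/2$. Let $F_n(x)=x/k+b_n$, $n=0,\dots,d-1$, be the similitudes mapping $T$ onto the $d$ triangles of side $1/k$ with the same orientation as $T$ in the subdivision of $T$ into $k^2$ triangles. $SG_k$ is $K=\bigcup_nF_n(K)$. Notation: $F_w=F_{w_1}\circ\cdots\circ F_{w_m}$, and a cell is a set $F_wK$. $V_0=\{q_0,q_1,q_2\}$ and $V_m=\bigcup_{|w|=m}F_w(V_0)$. The graph $\Gamma_m$ on $V_m$ has $x\sim_my$ iff $x\ne y$ and $x,y\in F_w(V_0)$ for some $|w|=m$. Energy: $\mathcal E_m(u)=r^{-m}\sum_{x\sim_my}(u(x)-u(y))^2$, where $r=r_k$ is the unique $r>0$ with $\min\{\mathcal E_1(\tilde u):\tilde u|_{V_0}=u\}=\mathcal E_0(u)$ for all $u$ on $V_0$. Then $\mathcal E(u)=\lim_m\mathcal E_m(u|_{V_m})$ for continuous $u$ on $K$. A function $h$ is harmonic if $\mathcal E_m(h|_{V_m})=\mathcal E_0(h|_{V_0})$ for all $m$. $h_i$ ($i=0,1,2$) is the harmonic function with $h_i(q_j)=\delta_{ij}$. Energy measures: $\nu_u$ is the unique Borel measure with $\nu_u(F_wK)=r^{-|w|}\mathcal E(u\circ F_w)$, and $\nu_i:=\nu_{h_i}$. Probabilities: $p^j_{ni}$ is the probability that the simple random walk on $\Gamma_1$ started at $F_n(q_i)$ hits $q_j$ before hitting either of the other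 two points of $V_0$ (equivalently $p^j_{ni}=h_j(F_n(q_i))$). *)

(* Defs.v *)
From Stdlib Require Import Reals Lra List.
Open Scope R_scope.

Definition pt := (R * R)%type.
Definition padd (x y : pt) : pt := (fst x + fst y, snd x + snd y).
Definition pscale (c : R) (x : pt) : pt := (c * fst x, c * snd x).
Definition dist2 (x y : pt) : R :=
  sqrt ((fst x - fst y) ^ 2 + (snd x - snd y) ^ 2).

Definition q (i : nat) : pt :=
  match i with
  | O => (0, 0)
  | S O => (1, 0)
  | _ => (1 / 2, sqrt 3 / 2)
  end.

Definition dnum (k : nat) : nat := (k * (k + 1) / 2)%nat.

Definition sumR (N : nat) (f : nat -> R) : R :=
  fold_right Rplus 0 (map f (seq 0 N)).

(** Upward triangles of side 1/k in the subdivision of T are indexed by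
    (a,b) with a+b < k : the triangle with vertices q0 + (a q1 + b q2)/k + q_i/k.
    [idx] is an enumeration n |-> (a,b) of these d triangles. *)
Definition valid_enum (k : nat) (idx : nat -> nat * nat) : Prop :=
  (forall n, (n < dnum k)%nat -> (fst (idx n) + snd (idx n) < k)%nat) /\
  (forall n m, (n < dnum k)%nat -> (m < dnum k)%nat -> idx n = idx m -> n = m) /\
  (forall a b, (a + b < k)%nat -> exists n, (n < dnum k)%nat /\ idx n = (a, b)).

Definition Fmap (k : nat) (idx : nat -> nat * nat) (n : nat) (x : pt) : pt :=
  padd (pscale (/ INR k) x)
       (pscale (/ INR k) (padd (pscale (INR (fst (idx n))) (q 1))
                               (pscale (INR (snd (idx n))) (q 2)))).

Definition Fw (k : nat) (idx : nat -> nat * nat) (w : list nat) (x : pt) : pt :=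
  fold_right (fun n y => Fmap k idx n y) x w.

Definition word_ok (k : nat) (w : list nat) : Prop :=
  Forall (fun n => (n < dnum k)%nat) w.

Fixpoint words (d m : nat) : list (list nat) :=
  match m with
  | O => nil :: nil
  | S m' => flat_map (fun w => map (fun n => n :: w) (seq 0 d)) (words d m')
  end.

Definition in_T (x : pt) : Prop :=
  exists s t, 0 <= s /\ 0 <= t /\ s + t <= 1 /\
              x = padd (pscale s (q 1)) (pscale t (q 2)).

(** SG_k: K = intersection over m of the union of the level-m images of T
    (the attractor of the IFS {F_n}). *)
Definition in_K (k : nat) (idx : nat -> nat * nat) (x : pt) : Prop :=
  forall m : nat, exists w, word_ok k w /\ length w = m /\
                  exists y, in_T y /\ x = Fw k idx w y.

Definition cell (k : nat) (idx : nat -> nat * nat) (w : list nat) (x : pt) : Prop :=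
  exists y, in_K k idx y /\ x = Fw k idx w y.

Definition cell_energy (k : nat) (idx : nat -> nat * nat) (u : pt -> R)
  (w : list nat) : R :=
  (u (Fw k idx w (q 0)) - u (Fw k idx w (q 1))) ^ 2 +
  (u (Fw k idx w (q 0)) - u (Fw k idx w (q 2))) ^ 2 +
  (u (Fw k idx w (q 1)) - u (Fw k idx w (q 2))) ^ 2.

(** E_m(u) = r^{-m} sum_{x ~_m y} (u x - u y)^2 (each edge counted once;
    the edges of Gamma_m are exactly the edges of the level-m cells, each
    belonging to a single cell). *)
Definition Em (k : nat) (idx : nat -> nat * nat) (r : R) (u : pt -> R) (m : nat) : R :=
  / r ^ m * fold_right Rplus 0 (map (cell_energy k idx u) (words (dnum k) m)).

Definition renorm (k : nat) (idx : nat -> nat * nat) (r : R) : Prop :=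
  0 < r /\
  forall u : pt -> R,
    (forall v : pt -> R, (forall i, (i < 3)%nat -> v (q i) = u (q i)) ->
        Em k idx r u 0 <= Em k idx r v 1) /\
    (exists v : pt -> R, (forall i, (i < 3)%nat -> v (q i) = u (q i)) /\
        Em k idx r v 1 = Em k idx r u 0).

Definition harmonic (k : nat) (idx : nat -> nat * nat) (r : R) (h : pt -> R) : Prop :=
  forall m, Em k idx r h m = Em k idx r h 0.

Definition continuous_on_K (k : nat) (idx : nat -> nat * nat) (h : pt -> R) : Prop :=
  forall x, in_K k idx x -> forall eps, 0 < eps -> exists delta, 0 < delta /\
    forall y, in_K k idx y -> dist2 x y < delta -> Rabs (h x - h y) < eps.

Definition is_open (U : pt -> Prop) : Prop :=
  forall x, U x -> exists e, 0 < e /\ forall y, dist2 x y < e -> U y.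

Inductive borel : (pt -> Prop) -> Prop :=
| borel_open U : is_open U -> borel U
| borel_compl A : borel A -> borel (fun x => ~ A x)
| borel_cunion (A : nat -> pt -> Prop) :
    (forall n, borel (A n)) -> borel (fun x => exists n, A n x).

Definition borel_measure_on (K : pt -> Prop) (nu : (pt -> Prop) -> R) : Prop :=
  nu (fun _ => False) = 0 /\
  (forall A, borel A -> (forall x, A x -> K x) -> 0 <= nu A) /\
  (forall A : nat -> pt -> Prop,
     (forall n, borel (A n) /\ forall x, A n x -> K x) ->
     (forall n m x, n <> m -> A n x -> A m x -> False) ->
     infinite_sum (fun n => nu (A n)) (nu (fun x => exists n, A n x))).

Definition pp (k : nat) (idx : nat -> nat * nat) (h : nat -> pt -> R)
  (j n i : nat) : R := h j (Fmap k idx n (q i)).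

Definition mu (k : nat) (idx : nat -> nat * nat) (r : R) (h : nat -> pt -> R)
  (n j i : nat) : R :=
  let p0 := pp k idx h j n 0 in
  let p1 := pp k idx h j n 1 in
  let p2 := pp k idx h j n 2 in
  match i with
  | O => / r * (p0 ^ 2 - p0 * p1 - p0 * p2 + p1 * p2)
  | S O => / r * (p1 ^ 2 - p0 * p1 + p0 * p2 - p1 * p2)
  | _ => / r * (p2 ^ 2 + p0 * p1 - p0 * p2 - p1 * p2)
  end.

(* Main.v *)
Require Import Defs.
From Stdlib Require Import Reals List.
From Stdlib Require Import Lra Lia Classical FunctionalExtensionality PropExtensionality.
Open Scope R_scope.


Definition lsum {A} (f : A -> R) (L : list A) : R := fold_right Rplus 0 (map f L).

Lemma lsum_nil {A} (f : A -> R) : lsum f nil = 0.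
Proof. reflexivity. Qed.
Lemma lsum_cons {A} (f : A -> R) a L : lsum f (a :: L) = f a + lsum f L.
Proof. reflexivity. Qed.
Lemma lsum_app {A} (f : A -> R) L1 L2 : lsum f (L1 ++ L2) = lsum f L1 + lsum f L2.
Proof. induction L1; simpl; unfold lsum in *; simpl; try rewrite IHL1; lra. Qed.
Lemma lsum_ext {A} (f g : A -> R) L : (forall x, In x L -> f x = g x) -> lsum f L = lsum g L.
Proof. induction L; intros H. reflexivity. rewrite !lsum_cons. rewrite H by (simpl; auto).
 rewrite IHL; auto. intros; apply H; simpl; auto. Qed.
Lemma lsum_lin {A} (f g : A -> R) a b L : lsum (fun x => a * f x + b * g x) L = a * lsum f L + b * lsum g L.
Proof. induction L; unfold lsum in *; simpl; try rewrite IHL; lra. Qed.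
Lemma lsum_scal {A} (f : A -> R) a L : lsum (fun x => a * f x) L = a * lsum f L.
Proof. induction L; unfold lsum in *; simpl; try rewrite IHL; lra. Qed.
Lemma lsum_plus {A} (f g : A -> R) L : lsum (fun x => f x + g x) L = lsum f L + lsum g L.
Proof. induction L; unfold lsum in *; simpl; try rewrite IHL; lra. Qed.
Lemma lsum_minus {A} (f g : A -> R) L : lsum (fun x => f x - g x) L = lsum f L - lsum g L.
Proof. induction L; unfold lsum in *; simpl; try rewrite IHL; lra. Qed.
Lemma lsum_zero {A} (L : list A) : lsum (fun _ => 0) L = 0.
Proof. induction L; unfold lsum in *; simpl; try rewrite IHL; lra. Qed.
Lemma lsum_nonneg {A} (f : A -> R) L : (forall x, In x L -> 0 <= f x) -> 0 <= lsum f L.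
Proof. induction L; intros H; unfold lsum in *; simpl. lra.
 assert (0 <= f a) by (apply H; simpl; auto).
 assert (0 <= fold_right Rplus 0 (map f L)) by (apply IHL; intros; apply H; simpl; auto). lra. Qed.
Lemma lsum_zero_each {A} (f : A -> R) L : (forall x, In x L -> 0 <= f x) -> lsum f L = 0 ->
  forall x, In x L -> f x = 0.
Proof. induction L; intros H E x Hx; simpl in Hx. contradiction.
 rewrite lsum_cons in E.
 assert (0 <= f a) by (apply H; simpl; auto).
 assert (0 <= lsum f L) by (apply lsum_nonneg; intros; apply H; simpl; auto).
 destruct Hx as [<-|Hx]. lra. apply IHL; auto. intros; apply H; simpl; auto. lra. Qed.
Lemma lsum_swap {A B} (g : A -> B -> R) L1 L2 :
  lsum (fun a => lsum (fun b => g a b) L2) L1 = lsum (fun b => lsum (fun a => g a b) L1) L2.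
Proof. induction L1. simpl. rewrite lsum_nil. symmetry. apply lsum_zero.
 rewrite lsum_cons, IHL1. rewrite <- lsum_plus. apply lsum_ext. intros. rewrite lsum_cons. lra. Qed.
Lemma lsum_flat_map {A B} (f : B -> R) (g : A -> list B) L :
  lsum f (flat_map g L) = lsum (fun a => lsum f (g a)) L.
Proof. induction L; simpl. reflexivity. rewrite lsum_app, IHL. reflexivity. Qed.
Lemma lsum_map {A B} (f : B -> R) (g : A -> B) L : lsum f (map g L) = lsum (fun a => f (g a)) L.
Proof. unfold lsum. rewrite map_map. reflexivity. Qed.

Lemma sumR_lsum N f : sumR N f = lsum f (seq 0 N).
Proof. reflexivity. Qed.
Lemma sumR_S N f : sumR (S N) f = sumR N f + f N.
Proof. rewrite !sumR_lsum, seq_S, lsum_app. simpl. rewrite lsum_cons, lsum_nil. lra. Qed.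
Lemma sumR_3 f : sumR 3 f = f 0%nat + f 1%nat + f 2%nat.
Proof. unfold sumR; simpl. lra. Qed.


Lemma words_in d m w : In w (words d m) <-> (Forall (fun n => n < d)%nat w /\ length w = m).
Proof. revert w; induction m; intros w; simpl.
 - split. intros [<-|[]]. split; auto. intros [_ H]. destruct w; simpl in H; auto; discriminate.
 - rewrite in_flat_map. split.
   + intros [w' [Hw' Hin]]. apply in_map_iff in Hin. destruct Hin as [n [<- Hn]].
     apply IHm in Hw'. destruct Hw'. apply in_seq in Hn. split. constructor; auto; lia. simpl; lia.
   + intros [HF HL]. destruct w as [|n w']. simpl in HL; discriminate.
     inversion HF; subst. exists w'. split. apply IHm. split; auto.
     apply in_map_iff. exists n. split; auto. apply in_seq. lia.
Qed.

Section Energy.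
Variable k : nat.
Variable idx : nat -> nat * nat.
Variable r : R.
Hypothesis hr : renorm k idx r.

Let d := dnum k.
Definition ce u w := cell_energy k idx u w.
Definition dif u w (a b : nat) := u (Fw k idx w (q a)) - u (Fw k idx w (q b)).
Definition cb u v w := dif u w 0 1 * dif v w 0 1 + dif u w 0 2 * dif v w 0 2 + dif u w 1 2 * dif v w 1 2.
Definition Bm u v m := / r ^ m * lsum (cb u v) (words d m).

Lemma ce_cb u w : ce u w = cb u u w.
Proof. unfold ce, cell_energy, cb, dif. ring. Qed.
Lemma Em_Bm u m : Em k idx r u m = Bm u u m.
Proof. unfold Em, Bm. f_equal. apply lsum_ext. intros. rewrite <- ce_cb. reflexivity. Qed.

Lemma r_pos : 0 < r. Proof. destruct hr; auto. Qed.

Lemma Em0 u : Em k idx r u 0 = ce u nil.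
Proof. unfold Em. simpl. unfold ce. lra. Qed.

Lemma ce_ge0 u w : 0 <= ce u w.
Proof. unfold ce, cell_energy. repeat apply Rplus_le_le_0_compat; apply pow2_ge_0. Qed.

Lemma Em_ge0 u m : 0 <= Em k idx r u m.
Proof. unfold Em. apply Rmult_le_pos. left; apply Rinv_0_lt_compat, pow_lt, r_pos.
 apply lsum_nonneg. intros; apply ce_ge0. Qed.

Lemma Em_S u m : Em k idx r u (S m) = / r * lsum (fun n => Em k idx r (fun x => u (Fmap k idx n x)) m) (seq 0 d).
Proof. unfold Em. change (fold_right Rplus 0 (map (cell_energy k idx u) (words (dnum k) (S m))))
   with (lsum (cell_energy k idx u) (words d (S m))).
 simpl words. fold d. rewrite lsum_flat_map.
 rewrite (lsum_ext _ (fun w => lsum (fun n => cell_energy k idx (fun x => u (Fmap k idx n x)) w) (seq 0 d))).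
 2:{ intros. rewrite lsum_map. reflexivity. }
 rewrite lsum_swap.
 transitivity (/ r * (/ r ^ m * lsum (fun n => lsum (cell_energy k idx (fun x => u (Fmap k idx n x))) (words d m)) (seq 0 d))).
 - simpl. rewrite Rinv_mult. rewrite Rmult_assoc. f_equal.
 - f_equal. rewrite <- lsum_scal. reflexivity. Qed.

Lemma Em_mono u m : Em k idx r u 0 <= Em k idx r u m.
Proof. revert u; induction m; intros u. lra.
 assert (H1 : Em k idx r u 0 <= Em k idx r u 1).
 { destruct hr as [_ H]. destruct (H u) as [H' _]. apply H'. auto. }
 eapply Rle_trans. apply H1. rewrite !Em_S. pose proof r_pos.
 apply Rmult_le_compat_l. left; apply Rinv_0_lt_compat; auto.
 unfold lsum. induction (seq 0 d); simpl. lra. specialize (IHm (fun x => u (Fmap k idx a x))). lra.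
Qed.

Lemma harm_restrict h n : harmonic k idx r h -> (n < d)%nat -> harmonic k idx r (fun x => h (Fmap k idx n x)).
Proof. intros Hh Hn m.
 pose proof (Hh (S m)) as E1. pose proof (Hh 1%nat) as E2.
 rewrite Em_S in E1, E2. rewrite <- E2 in E1. pose proof r_pos.
 apply Rmult_eq_reg_l in E1; [|apply Rinv_neq_0_compat; lra].
 assert (E : lsum (fun n => Em k idx r (fun x => h (Fmap k idx n x)) m - Em k idx r (fun x => h (Fmap k idx n x)) 0) (seq 0 d) = 0).
 { rewrite lsum_minus. lra. }
 apply (lsum_zero_each _ _) with (x := n) in E.
 lra. intros x _. pose proof (Em_mono (fun y => h (Fmap k idx x y)) m). lra. apply in_seq. lia. Qed.

Lemma harm_word h w : harmonic k idx r h -> word_ok k w -> harmonic k idx r (fun x => h (Fw k idx w x)).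
Proof. revert h. induction w as [|n w IH]; intros h Hh Hw. simpl. exact Hh.
 inversion Hw; subst. apply (IH (fun x => h (Fmap k idx n x))); auto. apply harm_restrict; auto. Qed.

Lemma Bm_sym u v m : Bm u v m = Bm v u m.
Proof. unfold Bm. f_equal. apply lsum_ext. intros. unfold cb. ring. Qed.

Lemma crit h phi m : harmonic k idx r h -> (forall i, (i < 3)%nat -> phi (q i) = 0) -> Bm h phi m = 0.
Proof. intros Hh Hphi. pose proof r_pos.
 set (B := Bm h phi m). set (Q := Bm phi phi m).
 assert (HQ : 0 <= Q) by (unfold Q; rewrite <- Em_Bm; apply Em_ge0).
 assert (Hexp : forall t, Em k idx r (fun x => h x + t * phi x) m = Em k idx r h m + 2 * t * B + t * t * Q).
 { intros t. rewrite !Em_Bm. unfold B, Q, Bm.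
   rewrite (lsum_ext _ (fun w => cb h h w + (2 * t) * cb h phi w + (t * t) * cb phi phi w)).
   rewrite !lsum_plus, !lsum_scal. ring.
   intros. unfold cb, dif. ring. }
 assert (Hb : forall t, Em k idx r h m <= Em k idx r (fun x => h x + t * phi x) m).
 { intros t. rewrite (Hh m). rewrite !Em0.
   replace (ce h nil) with (ce (fun x => h x + t * phi x) nil). rewrite <- Em0. apply (Em_mono (fun x => h x + t * phi x) m).
   unfold ce, cell_energy. cbn [Fw fold_right]. rewrite !Hphi by lia. rewrite !Rmult_0_r, !Rplus_0_r. reflexivity. }
 specialize (Hb (- B / (Q + 1))). rewrite Hexp in Hb.
 assert (0 <= 2 * (- B / (Q + 1)) * B + (- B / (Q + 1)) * (- B / (Q + 1)) * Q) by lra.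
 assert (0 <= (2 * (- B / (Q + 1)) * B + (- B / (Q + 1)) * (- B / (Q + 1)) * Q) * ((Q+1)*(Q+1))).
 { apply Rmult_le_pos; nra. }
 replace ((2 * (- B / (Q + 1)) * B + (- B / (Q + 1)) * (- B / (Q + 1)) * Q) * ((Q+1)*(Q+1)))
   with (- B * B * (Q + 2)) in H1 by (field; lra).
 nra. Qed.

Lemma zero_edges psi m : (forall phi, (forall i, (i < 3)%nat -> phi (q i) = 0) -> Bm psi phi m = 0) ->
  (forall i, (i < 3)%nat -> psi (q i) = 0) ->
  forall w, word_ok k w -> length w = m ->
   dif psi w 0 1 = 0 /\ dif psi w 0 2 = 0 /\ dif psi w 1 2 = 0.
Proof. intros Hc Hb w Hw Hl. specialize (Hc psi Hb). pose proof r_pos.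
 unfold Bm in Hc. apply Rmult_integral in Hc. destruct Hc as [Hc|Hc].
 exfalso. revert Hc. apply Rinv_neq_0_compat, pow_nonzero. lra.
 assert (Hin : In w (words d m)) by (apply words_in; auto).
 apply (lsum_zero_each (cb psi psi)) with (x := w) in Hc; auto.
 unfold cb in Hc. nra. intros. rewrite <- ce_cb. apply ce_ge0. Qed.

Lemma Bm_lin4 psi f0 f1 f2 f3 a0 a1 a2 a3 phi m :
  (forall w, cb psi phi w = a0 * cb f0 phi w + a1 * cb f1 phi w + a2 * cb f2 phi w + a3 * cb f3 phi w) ->
  Bm psi phi m = a0 * Bm f0 phi m + a1 * Bm f1 phi m + a2 * Bm f2 phi m + a3 * Bm f3 phi m.
Proof. intros H. unfold Bm. rewrite (lsum_ext _ _ _ (fun w _ => H w)).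
 rewrite !lsum_plus, !lsum_scal. ring. Qed.

End Energy.


Lemma set_ext (A B : pt -> Prop) : (forall x, A x <-> B x) -> A = B.
Proof. intros H. apply functional_extensionality. intros x. apply propositional_extensionality. auto. Qed.

Lemma cv_const_lim (u : nat -> R) c l : (forall m, u m = c) -> Un_cv u l -> l = c.
Proof. intros Hu Hc. apply (UL_sequence u); auto. intros e He. exists 0%nat. intros. rewrite Hu. unfold Rdist.
 rewrite Rminus_diag, Rabs_R0. lra. Qed.

Section Part1.
Variable k : nat.
Hypothesis hk : (2 <= k)%nat.
Variable idx : nat -> nat * nat.
Variable r : R.
Hypothesis hr : renorm k idx r.
Variable h : nat -> pt -> R.
Hypothesis hharm : forall i, (i < 3)%nat -> harmonic k idx r (h i).
Hypothesis hbd : forall i j, (i < 3)%nat -> (j < 3)%nat ->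
           h i (q j) = if Nat.eqb i j then 1 else 0.
Variable nu : nat -> (pt -> Prop) -> R.
Hypothesis hcell : forall i w, (i < 3)%nat -> word_ok k w ->
           Un_cv (fun m => Em k idx r (fun x => h i (Fw k idx w x)) m)
                 (r ^ length w * nu i (cell k idx w)).

Lemma nu_cell i w : (i < 3)%nat -> word_ok k w -> nu i (cell k idx w) = ce k idx (h i) w / r ^ length w.
Proof. intros Hi Hw. pose proof (r_pos k idx r hr).
 pose proof (hcell i w Hi Hw) as Hc. apply cv_const_lim with (c := ce k idx (h i) w) in Hc.
 - assert (0 < r ^ length w) by (apply pow_lt; auto). field_simplify; [|lra]. rewrite <- Hc. field. lra.
 - intros m. rewrite (harm_word k idx r hr (h i) w (hharm i Hi) Hw m). rewrite Em0. reflexivity. Qed.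

Lemma edges_sum w : word_ok k w -> forall a b,
  dif k idx (h 0%nat) w a b + dif k idx (h 1%nat) w a b + dif k idx (h 2%nat) w a b = 0 \/ ~ ((a = 0 /\ b = 1) \/ (a = 0 /\ b = 2) \/ (a = 1 /\ b = 2))%nat.
Proof. intros Hw a b.
 set (psi := fun x => h 0%nat x + h 1%nat x + h 2%nat x - 1).
 assert (Hb : forall l, (l < 3)%nat -> psi (q l) = 0).
 { intros l Hl. unfold psi. rewrite !hbd by lia. destruct l as [|[|[|]]]; simpl; try lra; lia. }
 assert (Hc : forall phi, (forall i, (i < 3)%nat -> phi (q i) = 0) -> Bm k idx r psi phi (length w) = 0).
 { intros phi Hphi. rewrite (Bm_lin4 k idx r psi (h 0%nat) (h 1%nat) (h 2%nat) (h 0%nat) 1 1 1 0).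
   - rewrite !(crit k idx r hr) by auto. ring.
   - intros w'. unfold cb, dif, psi. ring. }
 destruct (zero_edges k idx r hr psi (length w) Hc Hb w Hw eq_refl) as [E1 [E2 E3]].
 unfold dif, psi in *.
 destruct (classic ((a = 0 /\ b = 1) \/ (a = 0 /\ b = 2) \/ (a = 1 /\ b = 2))%nat) as [H|H]; [left|right; auto].
 destruct H as [[-> ->]|[[-> ->]|[-> ->]]]; lra. Qed.

Lemma edges_child j n w : (j < 3)%nat -> (n < dnum k)%nat -> word_ok k w -> forall a b,
  ((a = 0 /\ b = 1) \/ (a = 0 /\ b = 2) \/ (a = 1 /\ b = 2))%nat ->
  dif k idx (h j) (n :: w) a b = pp k idx h j n 0 * dif k idx (h 0%nat) w a b
     + pp k idx h j n 1 * dif k idx (h 1%nat) w a b + pp k idx h j n 2 * dif k idx (h 2%nat) w a b.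
Proof. intros Hj Hn Hw a b Hab.
 set (p0 := pp k idx h j n 0). set (p1 := pp k idx h j n 1). set (p2 := pp k idx h j n 2).
 set (psi := fun x => h j (Fmap k idx n x) - (p0 * h 0%nat x + p1 * h 1%nat x + p2 * h 2%nat x)).
 assert (Hb : forall l, (l < 3)%nat -> psi (q l) = 0).
 { intros l Hl. unfold psi. rewrite !hbd by lia. unfold p0, p1, p2, pp.
   destruct l as [|[|[|]]]; simpl; try lra; lia. }
 assert (Hc : forall phi, (forall i, (i < 3)%nat -> phi (q i) = 0) -> Bm k idx r psi phi (length w) = 0).
 { intros phi Hphi.
   rewrite (Bm_lin4 k idx r psi (fun x => h j (Fmap k idx n x)) (h 0%nat) (h 1%nat) (h 2%nat) 1 (-p0) (-p1) (-p2)).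
   - rewrite !(crit k idx r hr) by (auto; apply harm_restrict; auto). ring.
   - intros w'. unfold cb, dif, psi. ring. }
 destruct (zero_edges k idx r hr psi (length w) Hc Hb w Hw eq_refl) as [E1 [E2 E3]].
 unfold dif, psi in *. change (Fw k idx (n :: w) ?x) with (Fmap k idx n (Fw k idx w x)).
 destruct Hab as [[-> ->]|[[-> ->]|[-> ->]]]; lra. Qed.

Lemma ce_dif u w : ce k idx u w = dif k idx u w 0 1 ^ 2 + dif k idx u w 0 2 ^ 2 + dif k idx u w 1 2 ^ 2.
Proof. reflexivity. Qed.

Lemma part1 n w j : (n < dnum k)%nat -> word_ok k w -> (j < 3)%nat ->
     nu j (fun x => exists y, cell k idx w y /\ x = Fmap k idx n y)
     = sumR 3 (fun i => mu k idx r h n j i * nu i (cell k idx w)).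
Proof. intros Hn Hw Hj. pose proof (r_pos k idx r hr).
 replace (fun x => exists y, cell k idx w y /\ x = Fmap k idx n y) with (cell k idx (n :: w)).
 2:{ apply set_ext. intros x. unfold cell. split.
     - intros [y [Hy ->]]. exists (Fw k idx w y). split; [exists y; auto|reflexivity].
     - intros [y [[z [Hz ->]] ->]]. exists z. split; auto. }
 assert (Hw' : word_ok k (n :: w)) by (constructor; auto).
 rewrite nu_cell by auto. rewrite sumR_3. rewrite !nu_cell by (auto; lia).
 rewrite !ce_dif. simpl length.
 pose proof (edges_sum w Hw 0 1) as S01. pose proof (edges_sum w Hw 0 2) as S02. pose proof (edges_sum w Hw 1 2) as S12.
 destruct S01 as [S01|S01]; [|exfalso; apply S01; auto].
 destruct S02 as [S02|S02]; [|exfalso; apply S02; auto].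
 destruct S12 as [S12|S12]; [|exfalso; apply S12; auto].
 rewrite !(edges_child j n w Hj Hn Hw) by lia.
 unfold mu.
 set (p0 := pp k idx h j n 0). set (p1 := pp k idx h j n 1). set (p2 := pp k idx h j n 2).
 assert (E1 : dif k idx (h 2%nat) w 0 1 = - dif k idx (h 0%nat) w 0 1 - dif k idx (h 1%nat) w 0 1) by lra.
 assert (E2 : dif k idx (h 2%nat) w 0 2 = - dif k idx (h 0%nat) w 0 2 - dif k idx (h 1%nat) w 0 2) by lra.
 assert (E3 : dif k idx (h 2%nat) w 1 2 = - dif k idx (h 0%nat) w 1 2 - dif k idx (h 1%nat) w 1 2) by lra.
 rewrite E1, E2, E3.
 assert (0 < r ^ length w) by (apply pow_lt; auto).
 simpl pow. field. lra. Qed.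

End Part1.


Lemma dist2_sym x y : dist2 x y = dist2 y x.
Proof. unfold dist2. f_equal. ring. Qed.
Lemma dist2_ge0 x y : 0 <= dist2 x y.
Proof. apply sqrt_pos. Qed.
Lemma dist2_fst x y : Rabs (fst x - fst y) <= dist2 x y.
Proof. unfold dist2. rewrite <- sqrt_Rsqr_abs. apply sqrt_le_1_alt. unfold Rsqr. simpl.
 pose proof (pow2_ge_0 (snd x - snd y)). nra. Qed.
Lemma dist2_snd x y : Rabs (snd x - snd y) <= dist2 x y.
Proof. unfold dist2. rewrite <- sqrt_Rsqr_abs. apply sqrt_le_1_alt. unfold Rsqr. simpl.
 pose proof (pow2_ge_0 (fst x - fst y)). nra. Qed.
Lemma sq_le_abs u a : Rabs u <= a -> u * u <= a * a.
Proof. intros H. replace (u*u) with (Rabs u * Rabs u). pose proof (Rabs_pos u). nra.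
 rewrite <- Rabs_mult. apply Rabs_pos_eq. nra. Qed.
Lemma dist2_bound x y a : 0 <= a -> Rabs (fst x - fst y) <= a -> Rabs (snd x - snd y) <= a -> dist2 x y <= 2 * a.
Proof. intros Ha H1 H2. unfold dist2. rewrite <- (sqrt_Rsqr (2 * a)) by lra. apply sqrt_le_1_alt.
 unfold Rsqr. simpl. rewrite !Rmult_1_r.
 apply sq_le_abs in H1. apply sq_le_abs in H2. nra. Qed.

Lemma dist2_affine c o x y : dist2 (padd (pscale c x) o) (padd (pscale c y) o) = Rabs c * dist2 x y.
Proof. unfold dist2, padd, pscale; cbn [fst snd].
 replace ((c * fst x + fst o - (c * fst y + fst o)) ^ 2 + (c * snd x + snd o - (c * snd y + snd o)) ^ 2)
   with (Rsqr c * ((fst x - fst y) ^ 2 + (snd x - snd y) ^ 2)) by (unfold Rsqr; ring).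
 rewrite sqrt_mult. rewrite sqrt_Rsqr_abs. reflexivity. apply Rle_0_sqr.
 pose proof (pow2_ge_0 (fst x - fst y)). pose proof (pow2_ge_0 (snd x - snd y)). lra. Qed.

Definition contf (f : pt -> pt) := forall x e, 0 < e -> exists dl, 0 < dl /\ forall y, dist2 x y < dl -> dist2 (f x) (f y) < e.

Lemma contf_affine c o : contf (fun x => padd (pscale c x) o).
Proof. intros x e He. exists (e / (Rabs c + 1)). split. apply Rdiv_lt_0_compat; auto. pose proof (Rabs_pos c); lra.
 intros y Hy. rewrite dist2_affine. pose proof (Rabs_pos c). pose proof (dist2_ge0 x y).
 apply Rle_lt_trans with ((Rabs c + 1) * dist2 x y). nra.
 apply Rmult_lt_reg_r with (/ (Rabs c + 1)). apply Rinv_0_lt_compat; lra.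
 replace ((Rabs c + 1) * dist2 x y * / (Rabs c + 1)) with (dist2 x y) by (field; lra). exact Hy. Qed.

Lemma borel_ext A B : (forall x, A x <-> B x) -> borel A -> borel B.
Proof. intros H HA. replace B with A; auto. apply functional_extensionality; intros; apply propositional_extensionality; auto. Qed.

Lemma borel_full : borel (fun _ => True).
Proof. apply borel_open. intros x _. exists 1. split; auto; lra. Qed.
Lemma borel_empty : borel (fun _ => False).
Proof. apply (borel_ext (fun x => ~ True)). tauto. apply borel_compl, borel_full. Qed.
Lemma borel_union A B : borel A -> borel B -> borel (fun x => A x \/ B x).
Proof. intros HA HB. apply (borel_ext (fun x => exists n, (match n with O => A | _ => B end) x)).
 intros x; split. intros [[|n] H]; auto. intros [H|H]. exists 0%nat; auto. exists 1%nat; auto.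
 apply borel_cunion. intros [|n]; auto. Qed.
Lemma borel_inter A B : borel A -> borel B -> borel (fun x => A x /\ B x).
Proof. intros HA HB. apply (borel_ext (fun x => ~ (~ A x \/ ~ B x))).
 intros x. tauto. apply borel_compl, borel_union; apply borel_compl; auto. Qed.
Lemma borel_diff A B : borel A -> borel B -> borel (fun x => A x /\ ~ B x).
Proof. intros. apply borel_inter; auto. apply borel_compl; auto. Qed.
Lemma borel_cinter (A : nat -> pt -> Prop) : (forall n, borel (A n)) -> borel (fun x => forall n, A n x).
Proof. intros H. apply (borel_ext (fun x => ~ exists n, ~ A n x)).
 intros x. split. intros H1 n. apply NNPP. intros H2. apply H1. eauto. intros H1 [n Hn]. auto.
 apply borel_compl, borel_cunion. intros; apply borel_compl; auto. Qed.
Lemma borel_finunion {T} (A : T -> pt -> Prop) L : (forall t, In t L -> borel (A t)) ->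
  borel (fun x => exists t, In t L /\ A t x).
Proof. induction L; intros H.
 - apply (borel_ext (fun _ => False)). intros x; split. tauto. intros [t [[] _]]. apply borel_empty.
 - apply (borel_ext (fun x => A a x \/ exists t, In t L /\ A t x)).
   intros x; split. intros [H1|[t [H1 H2]]]. exists a; simpl; auto. exists t; simpl; auto.
   intros [t [[<-|H1] H2]]; auto. right; eauto.
   apply borel_union. apply H; simpl; auto. apply IHL. intros; apply H; simpl; auto. Qed.

Lemma borel_preimage f A : contf f -> borel A -> borel (fun x => A (f x)).
Proof. intros Hf HA. induction HA.
 - apply borel_open. intros x Hx. destruct (H (f x) Hx) as [e [He HU]].
   destruct (Hf x e He) as [dl [Hdl Hy]]. exists dl. split; auto.
 - apply borel_compl; auto.
 - apply borel_cunion; auto. Qed.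

Definition s3 := sqrt 3.
Lemma s3_sq : s3 * s3 = 3. Proof. unfold s3. apply sqrt_sqrt. lra. Qed.
Lemma s3_pos : 0 < s3. Proof. unfold s3. apply sqrt_lt_R0. lra. Qed.
Lemma s3_lt2 : s3 < 2. Proof. pose proof s3_sq; pose proof s3_pos. nra. Qed.

Lemma in_T_iff x : in_T x <-> (0 <= snd x /\ 0 <= s3 * fst x - snd x /\ 0 <= s3 - s3 * fst x - snd x).
Proof. pose proof s3_sq; pose proof s3_pos. split.
 - intros [s [t [Hs [Ht [Hst ->]]]]]. unfold padd, pscale, q; simpl. fold s3. nra.
 - destruct x as [x y]; simpl. intros [H1 [H2 H3]].
   exists (x - y / s3), (2 * y / s3).
   replace (x - y / s3) with ((s3 * x - y) / s3) by (field; lra).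
   replace (2 * y / s3) with ((2 * y) / s3) by (field; lra).
   split. unfold Rdiv; apply Rmult_le_pos; [lra|left; apply Rinv_0_lt_compat; lra].
   split. unfold Rdiv; apply Rmult_le_pos; [lra|left; apply Rinv_0_lt_compat; lra].
   split. apply Rmult_le_reg_l with s3; auto. field_simplify; lra.
   unfold padd, pscale, q; simpl. fold s3. f_equal; field; lra. Qed.

Lemma abs_le_inv u a : Rabs u <= a -> - a <= u /\ u <= a.
Proof. unfold Rabs; destruct Rcase_abs; lra. Qed.

Lemma lin_open a b c : Rabs a <= 2 -> Rabs b <= 2 -> is_open (fun x => a * fst x + b * snd x + c < 0).
Proof. intros Ha Hb x Hx. exists (- (a * fst x + b * snd x + c) / 4). split. lra.
 intros y Hy. pose proof (dist2_fst x y). pose proof (dist2_snd x y).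
 assert (E : Rabs (a * fst y + b * snd y + c - (a * fst x + b * snd x + c)) <= 4 * dist2 x y).
 { replace (a * fst y + b * snd y + c - (a * fst x + b * snd x + c)) with (a * (fst y - fst x) + b * (snd y - snd x)) by ring.
   eapply Rle_trans. apply Rabs_triang. rewrite !Rabs_mult.
   rewrite (Rabs_minus_sym (fst y)), (Rabs_minus_sym (snd y)).
   pose proof (Rabs_pos a); pose proof (Rabs_pos b); pose proof (Rabs_pos (fst x - fst y)); pose proof (Rabs_pos (snd x - snd y)).
   nra. }
 apply abs_le_inv in E. lra. Qed.

Lemma open_union U V : is_open U -> is_open V -> is_open (fun x => U x \/ V x).
Proof. intros HU HV x [H|H]. destruct (HU x H) as [e [He H1]]. exists e; split; auto.
 destruct (HV x H) as [e [He H1]]. exists e; split; auto. Qed.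

Lemma borel_T : borel in_T.
Proof. apply (borel_ext (fun x => ~ (snd x < 0 \/ s3 * fst x - snd x < 0 \/ s3 - s3 * fst x - snd x < 0))).
 intros x. rewrite in_T_iff. split. intros H. split; [|split]; apply Rnot_lt_le; tauto. intros H. lra.
 apply borel_compl, borel_open. pose proof s3_pos; pose proof s3_lt2.
 apply open_union; [|apply open_union].
 - intros x Hx. assert (HO := lin_open 0 1 0 ltac:(apply Rabs_le; lra) ltac:(apply Rabs_le; lra)).
   destruct (HO x ltac:(lra)) as [e [He H']].
   exists e; split; auto. intros y Hy. specialize (H' y Hy). lra.
 - intros x Hx. assert (HO := lin_open s3 (-1) 0 ltac:(apply Rabs_le; lra) ltac:(apply Rabs_le; lra)).
   destruct (HO x ltac:(lra)) as [e [He H']].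
   exists e; split; auto. intros y Hy. specialize (H' y Hy). lra.
 - intros x Hx. assert (HO := lin_open (-s3) (-1) s3 ltac:(apply Rabs_le; lra) ltac:(apply Rabs_le; lra)).
   destruct (HO x ltac:(lra)) as [e [He H']].
   exists e; split; auto. intros y Hy. specialize (H' y Hy). lra.
Qed.


Lemma bound_lemma (Q : nat -> nat -> Prop) N :
  (forall a M M', (M <= M')%nat -> Q a M -> Q a M') ->
  (forall a, (a < N)%nat -> exists M, Q a M) -> exists M, forall a, (a < N)%nat -> Q a M.
Proof. intros Hup. induction N; intros H. exists 0%nat. intros; lia.
 destruct IHN as [M1 HM1]. intros; apply H; lia.
 destruct (H N) as [M2 HM2]. lia.
 exists (Nat.max M1 M2). intros a Ha. destruct (Nat.eq_dec a N) as [->|].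
 apply (Hup _ M2); auto; lia. apply (Hup _ M1); auto. lia. apply HM1; lia. Qed.

Lemma Fw_app k idx u v x : Fw k idx (u ++ v) x = Fw k idx u (Fw k idx v x).
Proof. unfold Fw. apply fold_right_app. Qed.

Section Geo.
Variable k : nat.
Hypothesis hk : (2 <= k)%nat.
Variable idx : nat -> nat * nat.
Hypothesis hidx : valid_enum k idx.
Let d := dnum k.

Lemma kpos : 2 <= INR k.
Proof. replace 2 with (INR 2) by (simpl; lra). apply le_INR; auto. Qed.

Definition offs n := pscale (/ INR k) (padd (pscale (INR (fst (idx n))) (q 1)) (pscale (INR (snd (idx n))) (q 2))).
Definition Gmap n z := padd (pscale (INR k) z) (pscale (- INR k) (offs n)).

Lemma Fmap_affine n x : Fmap k idx n x = padd (pscale (/ INR k) x) (offs n).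
Proof. reflexivity. Qed.

Lemma F_G n z : Fmap k idx n (Gmap n z) = z.
Proof. pose proof kpos. destruct z as [z1 z2]. unfold Fmap, Gmap, offs, padd, pscale; simpl. f_equal; field; lra. Qed.
Lemma G_F n x : Gmap n (Fmap k idx n x) = x.
Proof. pose proof kpos. destruct x as [z1 z2]. unfold Fmap, Gmap, offs, padd, pscale; simpl. f_equal; field; lra. Qed.
Lemma Fmap_inj n x y : Fmap k idx n x = Fmap k idx n y -> x = y.
Proof. intros H. rewrite <- (G_F n x), <- (G_F n y), H. reflexivity. Qed.

Lemma contf_F n : contf (Fmap k idx n).
Proof. exact (contf_affine _ _). Qed.
Lemma contf_G n : contf (Gmap n).
Proof. exact (contf_affine _ _). Qed.

Lemma image_iff n (B : pt -> Prop) x : (exists y, B y /\ x = Fmap k idx n y) <-> B (Gmap n x).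
Proof. split. intros [y [Hy ->]]. rewrite G_F. auto. intros H. exists (Gmap n x). rewrite F_G. auto. Qed.

Lemma borel_image n B : borel B -> borel (fun x => exists y, B y /\ x = Fmap k idx n y).
Proof. intros HB. apply (borel_ext (fun x => B (Gmap n x))). intros; rewrite image_iff; tauto.
 apply borel_preimage; auto. apply contf_G. Qed.

Lemma borel_imagew w B : borel B -> borel (fun x => exists y, B y /\ x = Fw k idx w y).
Proof. intros HB. induction w as [|n w IH].
 - apply (borel_ext B); auto. intros x; split. intros Hx; exists x; auto. intros [y [Hy ->]]; auto.
 - apply (borel_ext (fun x => exists z, (exists y, B y /\ z = Fw k idx w y) /\ x = Fmap k idx n z)).
   intros x. split. intros [z [[y [Hy ->]] ->]]. exists y. auto. intros [y [Hy ->]]. exists (Fw k idx w y). eauto.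
   apply borel_image; auto. Qed.

Lemma idx_bound n : (n < d)%nat -> INR (fst (idx n)) + INR (snd (idx n)) + 1 <= INR k.
Proof. intros Hn. destruct hidx as [H _]. specialize (H n Hn).
 rewrite <- plus_INR. rewrite <- S_INR. apply le_INR. lia. Qed.

Lemma Fmap_T n y : (n < d)%nat -> in_T y -> in_T (Fmap k idx n y).
Proof. intros Hn [s [t [Hs [Ht [Hst ->]]]]]. pose proof (idx_bound n Hn). pose proof kpos.
 set (a := INR (fst (idx n))). set (b := INR (snd (idx n))). fold a b in H.
 assert (0 <= a) by apply pos_INR. assert (0 <= b) by apply pos_INR.
 exists ((s + a) / INR k), ((t + b) / INR k). split; [|split; [|split]].
 - unfold Rdiv. apply Rmult_le_pos. lra. left; apply Rinv_0_lt_compat; lra.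
 - unfold Rdiv. apply Rmult_le_pos. lra. left; apply Rinv_0_lt_compat; lra.
 - unfold Rdiv; rewrite <- Rmult_plus_distr_r. apply Rmult_le_reg_r with (INR k). lra.
   rewrite Rmult_assoc, Rinv_l, Rmult_1_r by lra. lra.
 - unfold Fmap, padd, pscale; simpl. fold a b. f_equal; field; lra. Qed.

Lemma Fw_T w y : word_ok k w -> in_T y -> in_T (Fw k idx w y).
Proof. induction w; intros Hw Hy. auto. inversion Hw; subst. simpl. apply Fmap_T; [auto|apply IHw; auto]. Qed.

Lemma K_T x : in_K k idx x -> in_T x.
Proof. intros H. destruct (H 0%nat) as [w [_ [Hl [y [Hy ->]]]]]. destruct w; try discriminate. exact Hy. Qed.

Lemma Fmap_K n y : (n < d)%nat -> in_K k idx y -> in_K k idx (Fmap k idx n y).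
Proof. intros Hn Hy m. destruct m as [|m].
 - exists nil. split. constructor. split. auto. exists (Fmap k idx n y). split; auto. apply Fmap_T; auto. apply K_T; auto.
 - destruct (Hy m) as [w [Hw [Hl [z [Hz ->]]]]]. exists (n :: w). split. constructor; auto. split. simpl; auto.
   exists z. auto. Qed.

Lemma Fw_K w y : word_ok k w -> in_K k idx y -> in_K k idx (Fw k idx w y).
Proof. induction w; intros Hw Hy. auto. inversion Hw; subst. simpl. apply Fmap_K; auto. Qed.

Lemma cell_K w x : word_ok k w -> cell k idx w x -> in_K k idx x.
Proof. intros Hw [y [Hy ->]]. apply Fw_K; auto. Qed.

Lemma konig1 x : in_K k idx x -> exists n, (n < d)%nat /\ exists y, in_K k idx y /\ x = Fmap k idx n y.
Proof. intros Hx.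
 set (Good := fun a m => exists w, word_ok k w /\ length w = m /\ exists y, in_T y /\ x = Fmap k idx a (Fw k idx w y)).
 assert (Hc : exists a, (a < d)%nat /\ forall m, exists m', (m <= m')%nat /\ Good a m').
 { apply NNPP. intros Hn.
   assert (H1 : forall a, (a < d)%nat -> exists M, forall m', (M <= m')%nat -> ~ Good a m').
   { intros a Ha. apply NNPP. intros H2. apply Hn. exists a. split; auto. intros m. apply NNPP. intros H3.
     apply H2. exists m. intros m' Hm' Hg. apply H3. eauto. }
   destruct (bound_lemma (fun a M => forall m', (M <= m')%nat -> ~ Good a m') d) as [M HM].
   { intros a M M' HMM' HQ m' Hm'. apply HQ. lia. }
   exact H1.
   destruct (Hx (S M)) as [w [Hw [Hl [y [Hy Hxe]]]]]. destruct w as [|a w']. discriminate.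
   inversion Hw as [|a0 w0 Ha Hw']; subst. apply (HM a Ha (length w')). simpl in Hl; lia.
   exists w'. split; auto. split; auto. exists y. split; auto. }
 destruct Hc as [a [Ha Hg]]. exists a. split; auto. exists (Gmap a x). split; [|rewrite F_G; auto].
 intros m. destruct (Hg m) as [m' [Hmm' [w [Hw [Hl [y [Hy Hxe]]]]]]].
 exists (firstn m w). assert (Hsplit : w = firstn m w ++ skipn m w) by (symmetry; apply firstn_skipn).
 unfold word_ok in Hw. rewrite Hsplit in Hw. apply Forall_app in Hw. destruct Hw as [Hw1 Hw2].
 split; auto. split. rewrite length_firstn. lia.
 exists (Fw k idx (skipn m w) y). split. apply Fw_T; auto.
 rewrite Hxe, G_F. rewrite <- Fw_app, <- Hsplit. reflexivity. Qed.

Lemma K_cells x : in_K k idx x -> forall M, exists w, In w (words d M) /\ cell k idx w x.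
Proof. intros Hx M. revert x Hx. induction M; intros x Hx.
 - exists nil. split. simpl; auto. exists x. auto.
 - destruct (konig1 x Hx) as [n [Hn [y [Hy ->]]]]. destruct (IHM y Hy) as [w [Hw [z [Hz ->]]]].
   exists (n :: w). split. apply words_in in Hw. destruct Hw. apply words_in. split. constructor; auto. simpl; lia.
   exists z. split; auto. Qed.

Lemma borel_K : borel (in_K k idx).
Proof. apply (borel_ext (fun x => forall m, exists w, In w (words d m) /\ (fun w x => exists y, in_T y /\ x = Fw k idx w y) w x)).
 - intros x. split; intros H m; destruct (H m) as [w [H1 H2]]; exists w.
   apply words_in in H1. tauto. destruct H2 as [H2 H3]. split; auto. apply words_in. tauto.
 - apply borel_cinter. intros m. apply borel_finunion. intros w _. apply borel_imagew. apply borel_T. Qed.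

Lemma borel_cell w : borel (cell k idx w).
Proof. apply borel_imagew. apply borel_K. Qed.

Lemma T_dist x y : in_T x -> in_T y -> dist2 x y <= 2.
Proof. intros Hx Hy. apply in_T_iff in Hx. apply in_T_iff in Hy. pose proof s3_pos; pose proof s3_lt2.
 replace 2 with (2 * 1) by ring. apply dist2_bound. lra.
 - apply Rabs_le. nra.
 - apply Rabs_le. nra. Qed.

Lemma Fw_dist w a b : dist2 (Fw k idx w a) (Fw k idx w b) = (/ INR k) ^ length w * dist2 a b.
Proof. pose proof kpos. induction w. simpl. ring. simpl Fw. simpl length. rewrite !(Fmap_affine a0).
 change (fold_right (fun n y => Fmap k idx n y) a w) with (Fw k idx w a).
 change (fold_right (fun n y => Fmap k idx n y) b w) with (Fw k idx w b).
 rewrite dist2_affine, IHw. rewrite Rabs_pos_eq. simpl. ring. left; apply Rinv_0_lt_compat; lra. Qed.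

Lemma cell_dist w x y : cell k idx w x -> cell k idx w y -> dist2 x y <= 2 * (/ INR k) ^ length w.
Proof. intros [a [Ha ->]] [b [Hb ->]]. rewrite Fw_dist. pose proof (T_dist a b (K_T a Ha) (K_T b Hb)).
 pose proof kpos. assert (0 <= (/ INR k) ^ length w). apply pow_le. left; apply Rinv_0_lt_compat; lra. nra. Qed.

End Geo.


Lemma pset_ext (A B : pt -> Prop) : (forall x, A x <-> B x) -> A = B.
Proof. intros H. apply functional_extensionality. intros x. apply propositional_extensionality. auto. Qed.

Lemma borel_U (X : nat -> pt -> Prop) N : (forall l, (l < N)%nat -> borel (X l)) -> borel (fun x => exists l, (l < N)%nat /\ X l x).
Proof. intros H. induction N.
 - apply (borel_ext (fun _ => False)). intros x; split. tauto. intros [l [Hl _]]; lia. apply borel_empty.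
 - apply (borel_ext (fun x => (exists l, (l < N)%nat /\ X l x) \/ X N x)).
   intros x; split. intros [[l [Hl H1]]|H1]. exists l; split; auto; lia. exists N; auto.
   intros [l [Hl H1]]. destruct (Nat.eq_dec l N) as [->|]. auto. left. exists l. split; auto; lia.
   apply borel_union; auto. Qed.

Section Meas.
Variable K0 : pt -> Prop.
Variable nu : (pt -> Prop) -> R.
Hypothesis hnu : borel_measure_on K0 nu.

Definition bk A := borel A /\ forall x, A x -> K0 x.

Lemma nu_empty : nu (fun _ => False) = 0.
Proof. destruct hnu; auto. Qed.
Lemma nu_ge0 A : bk A -> 0 <= nu A.
Proof. intros [H1 H2]. destruct hnu as [_ [H _]]. auto. Qed.

Lemma nu_add2 A B : bk A -> bk B -> (forall x, A x -> B x -> False) -> nu (fun x => A x \/ B x) = nu A + nu B.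
Proof. intros HA HB Hd. destruct hnu as [H0 [_ Hs]].
 set (S := fun n => match n with O => A | 1%nat => B | _ => fun _ => False end).
 assert (Hu : (fun x => A x \/ B x) = (fun x => exists n, S n x)).
 { apply pset_ext. intros x; split. intros [H|H]. exists 0%nat; auto. exists 1%nat; auto.
   intros [[|[|n]] H]; simpl in H; auto; contradiction. }
 rewrite Hu. apply (uniqueness_sum (fun n => nu (S n))).
 - apply Hs. intros [|[|n]]; simpl; auto. split. apply borel_empty. tauto.
   intros [|[|n]] [|[|m]] x Hnm; simpl; try tauto; try lia; intros; eauto.
 - intros e He. exists 1%nat. intros n Hn. replace (sum_f_R0 (fun n => nu (S n)) n) with (nu A + nu B).
   unfold Rdist. rewrite Rminus_diag, Rabs_R0. lra.
   induction n. lia. destruct n. simpl. reflexivity. simpl sum_f_R0 in *. rewrite IHn by lia. simpl. rewrite H0. ring. Qed.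

Lemma bk_union A B : bk A -> bk B -> bk (fun x => A x \/ B x).
Proof. intros [H1 H2] [H3 H4]. split. apply borel_union; auto. intros x [H|H]; auto. Qed.
Lemma bk_inter A B : bk A -> borel B -> bk (fun x => A x /\ B x).
Proof. intros [H1 H2] H3. split. apply borel_inter; auto. intros x [H _]; auto. Qed.
Lemma bk_diff A B : bk A -> borel B -> bk (fun x => A x /\ ~ B x).
Proof. intros [H1 H2] H3. split. apply borel_diff; auto. intros x [H _]; auto. Qed.

Lemma nu_split A B : bk A -> borel B -> nu A = nu (fun x => A x /\ B x) + nu (fun x => A x /\ ~ B x).
Proof. intros HA HB. rewrite <- nu_add2. f_equal. apply pset_ext. intros x. split. intros H.
 destruct (classic (B x)); auto. tauto. apply bk_inter; auto. apply bk_diff; auto. tauto. Qed.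

Lemma nu_mono A B : bk A -> bk B -> (forall x, A x -> B x) -> nu A <= nu B.
Proof. intros HA HB Hs. rewrite (nu_split B A) by apply HB || apply HA.
 replace (fun x => B x /\ A x) with A. pose proof (nu_ge0 (fun x => B x /\ ~ A x)). 
 assert (bk (fun x => B x /\ ~ A x)) by (apply bk_diff; [auto|apply HA]). 
 specialize (H H0). lra.
 apply pset_ext. intros x; split; auto. tauto. Qed.

Lemma nu_incl_excl A B : bk A -> bk B -> nu (fun x => A x \/ B x) = nu A + nu B - nu (fun x => B x /\ A x).
Proof. intros HA HB.
 assert (E1 : nu (fun x => A x \/ B x) = nu A + nu (fun x => B x /\ ~ A x)).
 { rewrite <- nu_add2. f_equal. apply pset_ext. intros x. split. intros [H|H]; auto. destruct (classic (A x)); auto.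
   intros [H|[H _]]; auto. auto. apply bk_diff; [auto|apply HA]. tauto. }
 rewrite (nu_split B A) in * by apply HB || apply HA. lra. Qed.

Lemma nu_finunion (X : nat -> pt -> Prop) N : (forall l, (l < N)%nat -> bk (X l)) ->
  nu (fun x => exists l, (l < N)%nat /\ X l x) =
  sumR N (fun l => nu (X l)) - sumR N (fun l => nu (fun x => X l x /\ exists l', (l' < l)%nat /\ X l' x)).
Proof. intros HX. induction N.
 - unfold sumR; simpl. rewrite Rminus_0_r. rewrite <- nu_empty. f_equal. apply pset_ext. intros x; split. intros [l [Hl _]]; lia. tauto.
 - rewrite !sumR_S.
   replace (fun x => exists l, (l < S N)%nat /\ X l x) with (fun x => (exists l, (l < N)%nat /\ X l x) \/ X N x).
   + rewrite nu_incl_excl. rewrite IHN. ring.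
     intros; apply HX; lia.
     split. apply borel_U. intros; apply HX; lia. intros x [l [Hl H]]. apply (proj2 (HX l ltac:(lia))); auto. apply HX; lia.
   + apply pset_ext. intros x; split. intros [[l [Hl H1]]|H1]. exists l; split; auto; lia. exists N; auto.
     intros [l [Hl H1]]. destruct (Nat.eq_dec l N) as [->|]. auto. left. exists l. split; auto; lia. Qed.

End Meas.


Section Over.
Variable k : nat.
Hypothesis hk : (2 <= k)%nat.
Variable idx : nat -> nat * nat.
Hypothesis hidx : valid_enum k idx.
Variable r : R.
Hypothesis hr : renorm k idx r.
Variable h : nat -> pt -> R.
Hypothesis hharm : forall i, (i < 3)%nat -> harmonic k idx r (h i).
Variable nu : nat -> (pt -> Prop) -> R.
Hypothesis hnu : forall i, (i < 3)%nat -> borel_measure_on (in_K k idx) (nu i).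
Hypothesis hcell : forall i w, (i < 3)%nat -> word_ok k w ->
           Un_cv (fun m => Em k idx r (fun x => h i (Fw k idx w x)) m)
                 (r ^ length w * nu i (cell k idx w)).
Let d := dnum k.

Lemma word_ok_app u v : word_ok k u -> word_ok k v -> word_ok k (u ++ v).
Proof. intros; apply Forall_app; auto. Qed.
Lemma word_ok_snoc u l : word_ok k u -> (l < d)%nat -> word_ok k (u ++ l :: nil).
Proof. intros; apply word_ok_app; auto. constructor; auto. Qed.

Lemma bk_cell w : word_ok k w -> bk (in_K k idx) (cell k idx w).
Proof. intros Hw. split. exact (borel_cell k hk idx w). intros x Hx. exact (cell_K k hk idx hidx w x Hw Hx). Qed.

Lemma sum_children u i : word_ok k u -> (i < 3)%nat ->
  sumR d (fun l => nu i (cell k idx (u ++ l :: nil))) = nu i (cell k idx u).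
Proof. intros Hu Hi. pose proof (r_pos k idx r hr).
 rewrite (nu_cell k idx r hr h hharm nu hcell i u Hi Hu).
 rewrite sumR_lsum. rewrite (lsum_ext _ (fun l => / r ^ (S (length u)) * ce k idx (fun x => h i (Fw k idx u x)) (l :: nil))).
 2:{ intros l Hl. apply in_seq in Hl. rewrite (nu_cell k idx r hr h hharm nu hcell) by (auto; apply word_ok_snoc; auto; lia).
     rewrite length_app. simpl length. rewrite Nat.add_1_r. unfold Rdiv. rewrite Rmult_comm. f_equal.
     unfold ce, cell_energy. rewrite !Fw_app. reflexivity. }
 rewrite lsum_scal.
 pose proof (harm_word k idx r hr (h i) u (hharm i Hi) Hu 1%nat) as E.
 rewrite Em_S, Em0 in E.
 rewrite (lsum_ext _ (fun n => ce k idx (fun x => h i (Fw k idx u x)) (n :: nil))) in E.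
 2:{ intros. rewrite Em0. reflexivity. }
 change (ce k idx (fun x => h i (Fw k idx u x)) nil) with (ce k idx (h i) u) in E. fold d in E.
 assert (0 < r ^ length u) by (apply pow_lt; auto).
 simpl pow. rewrite Rinv_mult. transitivity (/ r ^ length u * (/ r * lsum (fun n => ce k idx (fun x => h i (Fw k idx u x)) (n :: nil)) (seq 0 d))). ring. rewrite E. field. lra. Qed.

Lemma cell_children u x : word_ok k u ->
  (cell k idx u x <-> exists l, (l < d)%nat /\ cell k idx (u ++ l :: nil) x).
Proof. intros Hu. split.
 - intros [y [Hy ->]]. destruct (konig1 k hk idx hidx y Hy) as [l [Hl [z [Hz ->]]]].
   exists l. split; auto. exists z. split; auto. rewrite Fw_app. reflexivity.
 - intros [l [Hl [z [Hz ->]]]]. exists (Fmap k idx l z). split. apply Fmap_K; auto. rewrite Fw_app. reflexivity. Qed.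

Definition ovl u n := fun x => cell k idx (u ++ n :: nil) x /\ exists l, (l < n)%nat /\ cell k idx (u ++ l :: nil) x.

Lemma bk_ovl u n : word_ok k u -> (n < d)%nat -> bk (in_K k idx) (ovl u n).
Proof. intros Hu Hn. apply bk_inter. apply bk_cell. apply word_ok_snoc; auto. apply borel_U. intros; apply borel_cell; auto. Qed.

Lemma overlap0 i u n : (i < 3)%nat -> word_ok k u -> (n < d)%nat -> nu i (ovl u n) = 0.
Proof. intros Hi Hu Hn. pose proof (hnu i Hi) as Hm.
 pose proof (nu_finunion _ _ Hm (fun l => cell k idx (u ++ l :: nil)) d) as E.
 assert (Eq : (fun x => exists l, (l < d)%nat /\ cell k idx (u ++ l :: nil) x) = cell k idx u).
 { apply pset_ext. intros x. symmetry. apply cell_children; auto. }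
 specialize (E (fun l Hl => bk_cell _ (word_ok_snoc u l Hu Hl))). cbv beta in E. rewrite Eq in E. fold d in E. rewrite (sum_children u i Hu Hi) in E.
 assert (E2 : lsum (fun l => nu i (ovl u l)) (seq 0 d) = 0).
 { unfold ovl. rewrite <- sumR_lsum. fold d in E. lra. }
 apply lsum_zero_each with (x := n) in E2. auto.
 intros l Hl. apply in_seq in Hl. apply (nu_ge0 _ _ Hm). apply bk_ovl; auto; lia.
 apply in_seq; lia. Qed.
End Over.


Section Dynkin.
Variable K0 : pt -> Prop.
Variable P : (pt -> Prop) -> Prop.
Hypothesis HPK : forall A, P A -> forall x, A x -> K0 x.
Hypothesis Hpi : forall A B, P A -> P B -> P (fun x => A x /\ B x).

Inductive Dyn : (pt -> Prop) -> Prop :=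
 | DP A : P A -> Dyn A
 | DK : Dyn K0
 | DC A : Dyn A -> Dyn (fun x => K0 x /\ ~ A x)
 | DU (A : nat -> pt -> Prop) : (forall n, Dyn (A n)) -> (forall n m x, n <> m -> A n x -> A m x -> False) ->
        Dyn (fun x => exists n, A n x).

Lemma Dyn_sub A : Dyn A -> forall x, A x -> K0 x.
Proof. induction 1; intros x Hx. eauto. auto. tauto. destruct Hx as [n Hn]. eauto. Qed.

Lemma Dyn_ext A B : Dyn A -> (forall x, A x <-> B x) -> Dyn B.
Proof. intros HA H. replace B with A; auto. apply pset_ext; auto. Qed.

Lemma Dyn_empty : Dyn (fun _ => False).
Proof. apply (Dyn_ext (fun x => K0 x /\ ~ K0 x)). apply DC, DK. tauto. Qed.

Lemma Dyn_union2_disj A B : Dyn A -> Dyn B -> (forall x, A x -> B x -> False) -> Dyn (fun x => A x \/ B x).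
Proof. intros HA HB Hd.
 apply (Dyn_ext (fun x => exists n, (match n with O => A | 1%nat => B | _ => fun _ => False end) x)).
 - apply DU. intros [|[|n]]; auto. apply Dyn_empty.
   intros [|[|n]] [|[|m]] x Hnm; simpl; try tauto; try lia; intros; eauto.
 - intros x; split. intros [[|[|n]] H]; auto; contradiction. intros [H|H]. exists 0%nat; auto. exists 1%nat; auto. Qed.

Lemma Dyn_pdiff A B : Dyn A -> Dyn B -> (forall x, A x -> B x) -> Dyn (fun x => B x /\ ~ A x).
Proof. intros HA HB Hs.
 apply (Dyn_ext (fun x => K0 x /\ ~ (A x \/ (K0 x /\ ~ B x)))).
 - apply DC. apply Dyn_union2_disj; auto. apply DC; auto. intros x H1 [_ H2]. auto.
 - intros x. pose proof (Dyn_sub B HB x). tauto. Qed.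

Lemma step1 A B : P A -> Dyn B -> Dyn (fun x => A x /\ B x).
Proof. intros HA HB. induction HB.
 - apply DP. auto.
 - apply (Dyn_ext A). apply DP; auto. intros x. pose proof (HPK A HA x). tauto.
 - apply (Dyn_ext (fun x => A x /\ ~ (A x /\ A0 x))). apply Dyn_pdiff; auto. apply DP; auto. tauto.
   intros x. pose proof (HPK A HA x). tauto.
 - apply (Dyn_ext (fun x => exists n, A x /\ A0 n x)). apply DU; auto.
   intros n m x Hnm [_ a1] [_ a2]. eauto. intros x. split. intros [n [a1 a2]]. eauto. intros [a1 [n a2]]. eauto. Qed.

Lemma step2 A B : Dyn A -> Dyn B -> Dyn (fun x => A x /\ B x).
Proof. intros HA. revert B. induction HA; intros B HB.
 - apply step1; auto.
 - apply (Dyn_ext B); auto. intros x. pose proof (Dyn_sub B HB x). tauto.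
 - apply (Dyn_ext (fun x => B x /\ ~ (A x /\ B x))). apply Dyn_pdiff; auto. tauto.
   intros x. pose proof (Dyn_sub B HB x). tauto.
 - apply (Dyn_ext (fun x => exists n, A n x /\ B x)). apply DU; auto.
   intros n m x Hnm [a1 _] [a2 _]. eauto. intros x. split. intros [n [a1 a2]]. eauto. intros [[n a2] a1]. eauto. Qed.

Lemma Dyn_union2 A B : Dyn A -> Dyn B -> Dyn (fun x => A x \/ B x).
Proof. intros HA HB. apply (Dyn_ext (fun x => K0 x /\ ~ ((K0 x /\ ~ A x) /\ (K0 x /\ ~ B x)))).
 apply DC. apply step2; apply DC; auto.
 intros x. pose proof (Dyn_sub A HA x). pose proof (Dyn_sub B HB x). tauto. Qed.

Lemma least_index (A : nat -> pt -> Prop) x n : A n x -> exists n', A n' x /\ forall m, (m < n')%nat -> ~ A m x.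
Proof. revert n. induction n using (well_founded_induction Nat.lt_wf_0). intros Hn.
 destruct (classic (exists m, (m < n)%nat /\ A m x)) as [[m [Hm HAm]]|Hno].
 - apply (H m Hm HAm).
 - exists n. split; auto. intros m Hm HAm. apply Hno. eauto. Qed.

Lemma Dyn_cunion (A : nat -> pt -> Prop) : (forall n, Dyn (A n)) -> Dyn (fun x => exists n, A n x).
Proof. intros HA.
 assert (HU : forall n, Dyn (fun x => exists m, (m < n)%nat /\ A m x)).
 { induction n. apply (Dyn_ext (fun _ => False)). apply Dyn_empty. intros x; split. tauto. intros [m [Hm _]]; lia.
   apply (Dyn_ext (fun x => (exists m, (m < n)%nat /\ A m x) \/ A n x)). apply Dyn_union2; auto.
   intros x; split. intros [[m [Hm H1]]|H1]. exists m; split; auto; lia. exists n; auto.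
   intros [m [Hm H1]]. destruct (Nat.eq_dec m n) as [->|]. auto. left. exists m. split; auto; lia. }
 apply (Dyn_ext (fun x => exists n, A n x /\ (K0 x /\ ~ exists m, (m < n)%nat /\ A m x))).
 - apply DU. intros n. apply step2; auto. apply DC; auto.
   intros n m x Hnm [H1 [_ H2]] [H3 [_ H4]]. destruct (Nat.lt_total n m) as [Hlt|[Heq|Hlt]].
   apply H4. eauto. contradiction. apply H2. eauto.
 - intros x. split. intros [n [H1 _]]. eauto. intros [n Hn].
   destruct (least_index A x n Hn) as [n' [H1 H2]]. exists n'. split; auto. split. apply (Dyn_sub _ (HA n') x H1).
   intros [m [Hm H3]]. apply (H2 m); auto. Qed.

End Dynkin.


Lemma list_cases (w1 w2 : list nat) :
  (exists v, w2 = w1 ++ v) \/ (exists v, w1 = w2 ++ v) \/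
  exists u a b v1 v2, a <> b /\ w1 = u ++ a :: v1 /\ w2 = u ++ b :: v2.
Proof. revert w2. induction w1 as [|a w1 IH]; intros w2.
 - left. exists w2. reflexivity.
 - destruct w2 as [|b w2]. right; left. exists (a :: w1). reflexivity.
   destruct (Nat.eq_dec a b) as [<-|Hab].
   + destruct (IH w2) as [[v ->]|[[v ->]|[u [a' [b' [v1 [v2 [H1 [-> ->]]]]]]]]].
     left; exists v; reflexivity. right; left; exists v; reflexivity.
     right; right. exists (a :: u), a', b', v1, v2. auto.
   + right; right. exists nil, a, b, w1, w2. auto. Qed.

Lemma isum_lin3 a0 a1 a2 l0 l1 l2 c0 c1 c2 :
  infinite_sum a0 l0 -> infinite_sum a1 l1 -> infinite_sum a2 l2 ->
  infinite_sum (fun m => c0 * a0 m + c1 * a1 m + c2 * a2 m) (c0 * l0 + c1 * l1 + c2 * l2).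
Proof. intros H0 H1 H2.
 assert (E : forall n, sum_f_R0 (fun m => c0 * a0 m + c1 * a1 m + c2 * a2 m) n =
   c0 * sum_f_R0 a0 n + c1 * sum_f_R0 a1 n + c2 * sum_f_R0 a2 n).
 { induction n; simpl. ring. rewrite IHn. ring. }
 assert (Hc : forall c, Un_cv (fun _ => c) c).
 { intros c e He. exists 0%nat. intros. unfold Rdist. rewrite Rminus_diag, Rabs_R0. lra. }
 pose proof (CV_plus _ _ _ _ (CV_plus _ _ _ _ (CV_mult _ _ _ _ (Hc c0) H0) (CV_mult _ _ _ _ (Hc c1) H1))
              (CV_mult _ _ _ _ (Hc c2) H2)) as H.
 intros e He. destruct (H e He) as [N HN]. exists N. intros n Hn. rewrite E. apply HN; auto. Qed.

Lemma infinite_sum_ext a b l : (forall m, a m = b m) -> infinite_sum a l -> infinite_sum b l.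
Proof. intros E H. assert (ES : forall n, sum_f_R0 a n = sum_f_R0 b n).
 { induction n; simpl; rewrite E; auto. rewrite IHn; auto. }
 intros e He. destruct (H e He) as [N HN]. exists N. intros. rewrite <- ES. auto. Qed.

Section Part2.
Variable k : nat.
Hypothesis hk : (2 <= k)%nat.
Variable idx : nat -> nat * nat.
Hypothesis hidx : valid_enum k idx.
Variable r : R.
Hypothesis hr : renorm k idx r.
Variable h : nat -> pt -> R.
Hypothesis hharm : forall i, (i < 3)%nat -> harmonic k idx r (h i).
Hypothesis hbd : forall i j, (i < 3)%nat -> (j < 3)%nat ->
           h i (q j) = if Nat.eqb i j then 1 else 0.
Variable nu : nat -> (pt -> Prop) -> R.
Hypothesis hnu : forall i, (i < 3)%nat -> borel_measure_on (in_K k idx) (nu i).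
Hypothesis hcell : forall i w, (i < 3)%nat -> word_ok k w ->
           Un_cv (fun m => Em k idx r (fun x => h i (Fw k idx w x)) m)
                 (r ^ length w * nu i (cell k idx w)).
Let d := dnum k.
Let KK := in_K k idx.

Definition PP (B : pt -> Prop) : Prop :=
  (exists w, word_ok k w /\ B = cell k idx w) \/
  (borel B /\ exists u n, word_ok k u /\ (n < d)%nat /\ forall x, B x -> ovl k idx u n x).

Lemma PP_borel B : PP B -> borel B.
Proof. intros [[w [_ ->]]|[H _]]; auto. apply borel_cell; auto. Qed.

Lemma PP_K B : PP B -> forall x, B x -> KK x.
Proof. intros [[w [Hw ->]]|[_ [u [n [Hu [Hn Hs]]]]]] x Hx.
 - apply (cell_K k hk idx hidx w x); auto.
 - destruct (Hs x Hx) as [H1 _]. apply (cell_K k hk idx hidx (u ++ n :: nil) x); auto. apply word_ok_snoc; auto. Qed.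

Lemma cell_prefix w v x : word_ok k v -> cell k idx (w ++ v) x -> cell k idx w x.
Proof. intros Hv [y [Hy ->]]. exists (Fw k idx v y). split. apply Fw_K; auto. apply Fw_app. Qed.

Lemma PP_pi A B : PP A -> PP B -> PP (fun x => A x /\ B x).
Proof. intros HA HB.
 assert (HbA := PP_borel A HA). assert (HbB := PP_borel B HB).
 destruct HA as [[w1 [Hw1 ->]]|[_ [u [n [Hu [Hn Hs]]]]]].
 2:{ right. split. apply borel_inter; auto. exists u, n. split; auto. split; auto. intros x [Hx _]; auto. }
 destruct HB as [[w2 [Hw2 ->]]|[_ [u [n [Hu [Hn Hs]]]]]].
 2:{ right. split. apply borel_inter; auto. exists u, n. split; auto. split; auto. intros x [_ Hx]; auto. }
 destruct (list_cases w1 w2) as [[v ->]|[[v ->]|[u [a [b [v1 [v2 [Hab [-> ->]]]]]]]]].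
 - left. exists (w1 ++ v). split; auto. apply pset_ext. intros x. unfold word_ok in Hw2.
   apply Forall_app in Hw2. destruct Hw2 as [_ Hv]. split. tauto. intros H. split; auto. apply (cell_prefix _ v); auto.
 - left. exists (w2 ++ v). split; auto. apply pset_ext. intros x. unfold word_ok in Hw1.
   apply Forall_app in Hw1. destruct Hw1 as [_ Hv]. split. tauto. intros H. split; auto. apply (cell_prefix _ v); auto.
 - right. split. apply borel_inter; auto.
   unfold word_ok in Hw1, Hw2. apply Forall_app in Hw1. apply Forall_app in Hw2.
   destruct Hw1 as [Hu Ha]. destruct Hw2 as [_ Hb]. inversion Ha; subst. inversion Hb; subst.
   assert (C1 : forall x, cell k idx (u ++ a :: v1) x -> cell k idx (u ++ a :: nil) x).
   { intros x Hx. apply (cell_prefix _ v1); auto. rewrite <- app_assoc. exact Hx. }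
   assert (C2 : forall x, cell k idx (u ++ b :: v2) x -> cell k idx (u ++ b :: nil) x).
   { intros x Hx. apply (cell_prefix _ v2); auto. rewrite <- app_assoc. exact Hx. }
   destruct (Nat.lt_total a b) as [Hlt|[Heq|Hlt]]; [|contradiction|].
   + exists u, b. split; auto. split; auto. intros x [c1 c2]. split. auto. exists a. split; auto.
   + exists u, a. split; auto. split; auto. intros x [c1 c2]. split. auto. exists b. split; auto. Qed.

Definition Dy := Dyn KK PP.

Lemma borel_Dy B : borel B -> Dy (fun x => B x /\ KK x).
Proof. intros HB. induction HB.
 - set (piece := fun M i x => (i < length (words d M))%nat /\
          (forall y, cell k idx (nth i (words d M) nil) y -> U y) /\ cell k idx (nth i (words d M) nil) x).
   apply (Dyn_ext KK PP (fun x => exists M, exists i, piece M i x)).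
   + apply (Dyn_cunion KK PP PP_K PP_pi). intros M. apply (Dyn_cunion KK PP PP_K PP_pi). intros i.
     destruct (classic ((i < length (words d M))%nat /\ forall y, cell k idx (nth i (words d M) nil) y -> U y)) as [Hc|Hc].
     * apply (Dyn_ext KK PP (cell k idx (nth i (words d M) nil))). apply DP. left.
       exists (nth i (words d M) nil). split; auto. apply words_in with (m := M). apply nth_In. tauto.
       intros x. unfold piece. tauto.
     * apply (Dyn_ext KK PP (fun _ => False)). apply Dyn_empty. intros x. unfold piece. tauto.
   + intros x. split.
     * intros [M [i [Hi [HU Hx]]]]. split. apply HU; auto. eapply cell_K; eauto.
       apply words_in with (m := M). apply nth_In. auto.
     * intros [Ux Kx]. destruct (H x Ux) as [e [He HB]].
       pose proof kpos as Hk2. specialize (Hk2 k hk).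
       destruct (pow_lt_1_zero (/ INR k)) with (y := e / 2) as [M HM].
       { rewrite Rabs_pos_eq. apply Rmult_lt_reg_l with (INR k). lra. rewrite Rinv_r; lra. left; apply Rinv_0_lt_compat; lra. }
       lra.
       destruct (K_cells k hk idx hidx x Kx M) as [w [Hw Hxw]].
       fold d in Hw. destruct (In_nth _ _ nil Hw) as [i [Hi Hnth]].
       exists M, i. unfold piece. rewrite Hnth. split; auto. split; auto.
       intros y Hy. apply HB. pose proof (cell_dist k hk idx w x y Hxw Hy).
       apply words_in in Hw. destruct Hw as [_ Hl]. rewrite Hl in H0.
       specialize (HM M (le_n M)). rewrite Rabs_pos_eq in HM. lra. apply pow_le. left; apply Rinv_0_lt_compat; lra.
 - apply (Dyn_ext KK PP (fun x => KK x /\ ~ (A x /\ KK x))). apply DC. auto. intros x. tauto.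
 - apply (Dyn_ext KK PP (fun x => exists n, A n x /\ KK x)). apply (Dyn_cunion KK PP PP_K PP_pi). auto.
   intros x. split. intros [n [H1 H2]]. split; eauto. intros [[n H1] H2]. eauto. Qed.

Section Fixed.
Variable n : nat.
Hypothesis hn : (n < d)%nat.
Variable j : nat.
Hypothesis hj : (j < 3)%nat.

Definition img (B : pt -> Prop) := fun x => exists y, B y /\ x = Fmap k idx n y.
Definition al B := nu j (img B).
Definition be B := sumR 3 (fun i => mu k idx r h n j i * nu i B).
Definition LL B := bk KK B /\ al B = be B.

Lemma bk_img B : bk KK B -> bk KK (img B).
Proof. intros [H1 H2]. split. apply (borel_image k hk idx n B H1). intros x [y [Hy ->]]. apply (Fmap_K k hk idx hidx n y hn). apply H2; auto. Qed.

Lemma al_cell w : word_ok k w -> al (cell k idx w) = be (cell k idx w).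
Proof. intros Hw. apply (part1 k hk idx r hr h hharm hbd nu hcell); auto. Qed.

Lemma KK_cell0 : KK = cell k idx nil.
Proof. apply pset_ext. intros x. split. intros H. exists x. auto. intros [y [Hy ->]]. auto. Qed.

Lemma bk_KK : bk KK KK.
Proof. split. apply borel_K; auto. auto. Qed.

Lemma al_compl B : bk KK B -> al (fun x => KK x /\ ~ B x) = al KK - al B.
Proof. intros HB. unfold al. pose proof (hnu j hj) as Hm.
 rewrite (nu_split _ _ Hm (img KK) (img B)). 2: apply bk_img, bk_KK. 2: apply bk_img; auto.
 replace (fun x => img KK x /\ img B x) with (img B).
 replace (fun x => img KK x /\ ~ img B x) with (img (fun x => KK x /\ ~ B x)). ring.
 - apply pset_ext. intros x. split.
   + intros [y [[Hy HnB] ->]]. split. exists y; auto. intros [z [Hz Hzy]]. apply Fmap_inj in Hzy; auto. subst. auto.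
   + intros [[y [Hy ->]] Hn']. exists y. split; auto. split; auto. intros HB'. apply Hn'. exists y; auto.
 - apply pset_ext. intros x. split.
   + intros [y [Hy ->]]. split. exists y. split; auto. apply (proj2 HB); auto. exists y; auto.
   + tauto. Qed.

Lemma be_compl B : bk KK B -> be (fun x => KK x /\ ~ B x) = be KK - be B.
Proof. intros HB. unfold be. rewrite !sumR_3.
 assert (E : forall i, (i < 3)%nat -> nu i (fun x => KK x /\ ~ B x) = nu i KK - nu i B).
 { intros i Hi. pose proof (hnu i Hi) as Hm. rewrite (nu_split _ _ Hm KK B bk_KK (proj1 HB)).
   replace (fun x => KK x /\ B x) with B. ring. apply pset_ext. intros x. split. intros. split; auto. apply (proj2 HB); auto. tauto. }
 rewrite !E by lia. ring. Qed.

Lemma LL_KK : LL KK.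
Proof. split. apply bk_KK. rewrite KK_cell0. apply al_cell. constructor. Qed.

Lemma Dy_LL B : Dy B -> LL B.
Proof. induction 1 as [B HP| |B HD IH|A HA IH Hdisj].
 - destruct HP as [[w [Hw ->]]|[HB [u [m [Hu [Hm Hs]]]]]].
   + split. apply bk_cell; auto. apply al_cell; auto.
   + assert (HbB : bk KK B). { split; auto. apply PP_K. right. split; auto. exists u, m. auto. }
     split; auto.
     assert (Z : forall i, (i < 3)%nat -> nu i B = 0).
     { intros i Hi. pose proof (hnu i Hi) as Hmi. apply Rle_antisym.
       rewrite <- (overlap0 k hk idx hidx r hr h hharm nu hnu hcell i u m); auto.
       apply (nu_mono _ _ Hmi); auto. apply bk_ovl; auto.
       apply (nu_ge0 _ _ Hmi); auto. }
     unfold be. rewrite sumR_3. rewrite !Z by lia. rewrite !Rmult_0_r, !Rplus_0_r. unfold al. apply Rle_antisym.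
     * rewrite <- (overlap0 k hk idx hidx r hr h hharm nu hnu hcell j (n :: u) m); auto.
       apply (nu_mono _ _ (hnu j hj)). apply bk_img; auto. apply bk_ovl; auto. constructor; auto.
       intros x [y [Hy ->]]. destruct (Hs y Hy) as [[z [Hz ->]] [l [Hl [z' [Hz' Hzz]]]]].
       split. exists z. split; auto. exists l. split; auto. exists z'. split; auto. simpl. rewrite Hzz. reflexivity.
       constructor; auto.
     * apply (nu_ge0 _ _ (hnu j hj)). apply bk_img; auto.
 - apply LL_KK.
 - destruct IH as [HB HE]. split.
   + split. apply borel_inter. apply borel_K; auto. apply borel_compl, HB. tauto.
   + rewrite al_compl, be_compl by auto. destruct LL_KK as [_ E]. rewrite E, HE. reflexivity.
 - assert (HbA : forall m, bk KK (A m)) by (intros m; apply IH).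
   assert (HbU : bk KK (fun x => exists m, A m x)).
   { split. apply borel_cunion. intros; apply HbA. intros x [m Hm]. apply (proj2 (HbA m)); auto. }
   split; auto.
   assert (S1 : infinite_sum (fun m => al (A m)) (al (fun x => exists m, A m x))).
   { unfold al. replace (img (fun x => exists m, A m x)) with (fun x => exists m, img (A m) x).
     destruct (hnu j hj) as [_ [_ Hs]]. apply Hs. intros m. apply bk_img; auto.
     intros a b x Hab [y [Hy ->]] [z [Hz Hzy]]. apply Fmap_inj in Hzy; auto. subst. eauto.
     apply pset_ext. intros x. split. intros [m [y [Hy ->]]]. exists y. split; eauto.
     intros [y [[m Hy] ->]]. exists m, y. auto. }
   assert (S2 : infinite_sum (fun m => be (A m)) (be (fun x => exists m, A m x))).
   { unfold be. rewrite sumR_3.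
     apply (infinite_sum_ext (fun m => mu k idx r h n j 0 * nu 0%nat (A m) + mu k idx r h n j 1 * nu 1%nat (A m) + mu k idx r h n j 2 * nu 2%nat (A m))).
     intros m. rewrite sumR_3. reflexivity.
     apply isum_lin3; [destruct (hnu 0%nat ltac:(lia)) as [_ [_ Hs]]|destruct (hnu 1%nat ltac:(lia)) as [_ [_ Hs]]|destruct (hnu 2%nat ltac:(lia)) as [_ [_ Hs]]]; apply Hs; auto. }
   apply (uniqueness_sum (fun m => al (A m))); auto.
   apply (infinite_sum_ext (fun m => be (A m))); auto. intros m. symmetry. apply IH. Qed.
End Fixed.

Lemma part2 A : borel A -> (forall x, A x -> KK x) -> forall j, (j < 3)%nat ->
  nu j A = sumR d (fun n => sumR 3 (fun i => mu k idx r h n j i * nu i (fun x => KK x /\ A (Fmap k idx n x)))).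
Proof. intros HA HAK j Hj. pose proof (hnu j Hj) as Hm.
 assert (HbA : bk KK A) by (split; auto).
 set (X := fun n x => A x /\ cell k idx (n :: nil) x).
 assert (HX : forall n, (n < d)%nat -> bk KK (X n)). { intros n Hn. apply bk_inter; auto. apply borel_cell; auto. }
 pose proof (nu_finunion _ _ Hm X d HX) as E.
 replace (fun x => exists l, (l < d)%nat /\ X l x) with A in E.
 2:{ apply pset_ext. intros x. split.
     - intros Hx. destruct (konig1 k hk idx hidx x (HAK x Hx)) as [l [Hl [y [Hy ->]]]].
       exists l. split; auto. split; auto. exists y; auto.
     - intros [l [_ [Hx _]]]; auto. }
 rewrite E. rewrite (sumR_lsum d (fun l => nu j (fun x => X l x /\ _))).
 rewrite (lsum_ext _ (fun _ => 0)). rewrite lsum_zero, Rminus_0_r.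
 2:{ intros l Hl. apply in_seq in Hl. apply Rle_antisym.
     - rewrite <- (overlap0 k hk idx hidx r hr h hharm nu hnu hcell j nil l); auto; [|constructor|lia].
       apply (nu_mono _ _ Hm). apply bk_inter. apply HX; lia. apply borel_U. intros; apply borel_inter; auto; apply borel_cell; auto.
       apply bk_ovl; auto. constructor. lia.
       intros x [[_ H1] [l' [Hl' [_ H2]]]]. split; auto. exists l'. split; auto.
     - apply (nu_ge0 _ _ Hm). apply bk_inter. apply HX; lia. apply borel_U. intros; apply borel_inter; auto; apply borel_cell; auto. }
 rewrite !sumR_lsum. apply lsum_ext. intros n Hn. apply in_seq in Hn.
 set (Bn := fun x => KK x /\ A (Fmap k idx n x)).
 assert (HD : Dy Bn).
 { apply (Dyn_ext KK PP (fun x => A (Fmap k idx n x) /\ KK x)). apply borel_Dy. apply borel_preimage; auto. apply contf_F.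
   intros x. unfold Bn. tauto. }
 assert (HL := Dy_LL n ltac:(lia) j Hj Bn HD). destruct HL as [_ HL]. unfold al, be in HL.
 rewrite <- HL. f_equal. apply pset_ext. intros x. unfold X, img, Bn. split.
 - intros [Hx [y [Hy ->]]]. exists y. auto.
 - intros [y [[Hy HAy] ->]]. split; auto. exists y. auto. Qed.

End Part2.

Theorem theorem2p9
  (k : nat) (hk : (2 <= k)%nat)
  (idx : nat -> nat * nat) (hidx : valid_enum k idx)
  (r : R) (hr : renorm k idx r)
  (h : nat -> pt -> R)
  (hcont : forall i, (i < 3)%nat -> continuous_on_K k idx (h i))
  (hharm : forall i, (i < 3)%nat -> harmonic k idx r (h i))
  (hbd : forall i j, (i < 3)%nat -> (j < 3)%nat ->
           h i (q j) = if Nat.eqb i j then 1 else 0)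
  (nu : nat -> (pt -> Prop) -> R)
  (hnu : forall i, (i < 3)%nat -> borel_measure_on (in_K k idx) (nu i))
  (hcell : forall i w, (i < 3)%nat -> word_ok k w ->
           Un_cv (fun m => Em k idx r (fun x => h i (Fw k idx w x)) m)
                 (r ^ length w * nu i (cell k idx w))) :
  (forall n w j, (n < dnum k)%nat -> word_ok k w -> (j < 3)%nat ->
     nu j (fun x => exists y, cell k idx w y /\ x = Fmap k idx n y)
     = sumR 3 (fun i => mu k idx r h n j i * nu i (cell k idx w))) /\
  (forall A, borel A -> (forall x, A x -> in_K k idx x) ->
   forall j, (j < 3)%nat ->
     nu j A = sumR (dnum k) (fun n =>
                sumR 3 (fun i => mu k idx r h n j i *
                          nu i (fun x => in_K k idx x /\ A (Fmap k idx n x))))).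
Proof.
  split.
  - intros n w j Hn Hw Hj. exact (part1 k hk idx r hr h hharm hbd nu hcell n w j Hn Hw Hj).
  - intros A HA HAK j Hj. eapply part2; eauto.
Qed.
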